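(* Let $c\ge 2$ be an integer and $\lambda,\mu,\alpha>0$ with $\lambda<c\mu$. Let $(\pi_{i,j})_{(i,j)\in\mathcal S}$ be the stationary distribution of the continuous-time Markov chain on $\mathcal S=\{(i,j):0\le i\le c,\ j\ge i\}$ whose only transitions are: $(i,j)\to(i,j+1)$ at rate $\lambda$; $(i,j)\to(i+1,j)$ at rate $\min(j-i,c-i)\alpha$ for $i<c$, $j>i$; $(i,j)\to(i,j-1)$ at rate $i\mu$ for $i\ge1$, $j>i$; $(i,i)\to(i-1,i-1)$ at rate $i\mu$ for $i\ge 1$. Let $f_1(z)=(\lambda+\mu+(c-1)\alpha)z-\lambda z^2-\mu$, with roots $z_1=\frac{\lambda+\mu+(c-1)\alpha-\sqrt{(\lambda+\mu+(c-1)\alpha)^2-4\lambda\mu}}{2\lambda}$ and $\hat z_1=\frac{\lambda+\mu+(c-1)\alpha+\sqrt{(\lambda+\mu+(c-1)\alpha)^2-4\lambda\mu}}{2\lambda}$ (so $0<z_1<1<\hat z_1$), and let $\hat z_0=(\lambda+c\alpha)/\lambda$. Define $\widehat\Pi_0(z)=\sum_{j\ge c}\pi_{0,j}z^{j}$ and $\widehat\Pi_1(z)=\sum_{j\ge c}\pi_{1,j}z^{j-1}$. Define $a^{(1)}_c=\frac{c\alpha\widehat\Pi_0(z_1)}{\mu z_1^{c-1}}$, $b^{(1)}_c=\frac{\lambda z_1}{\mu}$, and for $j=c-1,c-2,\dots,1$, $$a^{(1)}_j=\frac{j\alpha\pi_{0,j}+\mu a^{(1)}_{j+1}}{\lambda+\mu+(j-1)\alpha-\mu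 b^{(1)}_{j+1}},\qquad b^{(1)}_j=\frac{\lambda}{\lambda+\mu+(j-1)\alpha-\mu b^{(1)}_{j+1}}.$$ Then: (i) $\pi_{1,j}=a^{(1)}_j+b^{(1)}_j\pi_{1,j-1}$ for $2\le j\le c$; (ii) $a^{(1)}_j>0$ and $0<b^{(1)}_j<\lambda/\mu$ for $j=1,\dots,c$; (iii) if $\hat z_0\neq\hat z_1$, then for all complex $z$ with $|z|\le 1$, $$\widehat\Pi_1(z)=z^{c-1}\left(\frac{A_{1,0}}{\hat z_0-z}+\frac{A_{1,1}}{\hat z_1-z}\right),\quad A_{1,0}=\frac{c\alpha\,\pi_{0,c-1}\hat z_0}{f_1(\hat z_0)},\quad A_{1,1}=\pi_{1,c-1}-A_{1,0}.$$
   Context: The chain models an M/M/$c$ queue with setup times under the ON-OFF policy: $i$ is the number of busy servers, $j$ the number of jobs in the system; arrivals are Poisson($\lambda$), services exp($\mu$), setups exp($\alpha$), and $\min(j-i,c-i)$ servers are in setup in state $(i,j)$. The condition $\lambda<c\mu$ guarantees a unique stationary distribution. *)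

(* Defs.v *)
From Stdlib Require Import Reals Arith Bool List.
Import ListNotations.
From Coquelicot Require Import Coquelicot.
Open Scope R_scope.

Definition inS (c : nat) (s : nat * nat) : bool :=
  Nat.leb (fst s) c && Nat.leb (fst s) (snd s).

Definition rate (c : nat) (lam mu alpha : R) (s t : nat * nat) : R :=
  let (i, j) := s in
  let (i', j') := t in
  if inS c s && inS c t then
      (if Nat.eqb i' i && Nat.eqb j' (j + 1) then lam else 0)
    + (if Nat.eqb i' (i + 1) && Nat.eqb j' j && Nat.ltb i c && Nat.ltb i j
       then INR (Nat.min (j - i) (c - i)) * alpha else 0)
    + (if Nat.eqb i' i && Nat.eqb j (j' + 1) && Nat.leb 1 i && Nat.ltb i j
       then INR i * mu else 0)
    + (if Nat.eqb i j && Nat.eqb i' j' && Nat.eqb i (i' + 1)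
       then INR i * mu else 0)
  else 0.

(** Every transition out of (i,j) goes to one of these states ... *)
Definition out_cands (s : nat * nat) : list (nat * nat) :=
  let (i, j) := s in [(i, j + 1); (i + 1, j); (i, j - 1); (i - 1, j - 1)]%nat.
(** ... and every transition into (i,j) comes from one of these states. *)
Definition in_cands (s : nat * nat) : list (nat * nat) :=
  let (i, j) := s in [(i, j - 1); (i - 1, j); (i, j + 1); (i + 1, j + 1)]%nat.

Definition sumR (l : list R) : R := fold_right Rplus 0 l.

Definition stationary (c : nat) (lam mu alpha : R) (pi : nat * nat -> R) : Prop :=
  (forall s, inS c s = true -> 0 <= pi s) /\
  (forall i, (i <= c)%nat -> ex_series (fun k => pi (i, i + k)%nat)) /\
  sum_n (fun i => Series (fun k => pi (i, i + k)%nat)) c = 1 /\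
  (forall s, inS c s = true ->
     pi s * sumR (map (rate c lam mu alpha s) (out_cands s))
     = sumR (map (fun t => pi t * rate c lam mu alpha t s) (in_cands s))).

Section Quantities.
Variables (c : nat) (lam mu alpha : R) (pi : nat * nat -> R).

Definition Bq : R := lam + mu + (INR c - 1) * alpha.
Definition z1 : R := (Bq - sqrt (Bq ^ 2 - 4 * lam * mu)) / (2 * lam).
Definition zh1 : R := (Bq + sqrt (Bq ^ 2 - 4 * lam * mu)) / (2 * lam).
Definition zh0 : R := (lam + INR c * alpha) / lam.
Definition f1 (z : R) : R := Bq * z - lam * z ^ 2 - mu.

Definition Pi0hat (z : R) : R := Series (fun k => pi (0, c + k)%nat * z ^ (c + k)).

(** (a^{(1)}_{c-k}, b^{(1)}_{c-k}), computed by backward recursion from j = c. *)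
Fixpoint ab (k : nat) : R * R :=
  match k with
  | O => (INR c * alpha * Pi0hat z1 / (mu * z1 ^ (c - 1)), lam * z1 / mu)
  | S k' =>
      let (a', b') := ab k' in
      let j := (c - k)%nat in
      let d := lam + mu + (INR j - 1) * alpha - mu * b' in
      ((INR j * alpha * pi (0%nat, j) + mu * a') / d, lam / d)
  end.

Definition a1 (j : nat) : R := fst (ab (c - j)).
Definition b1 (j : nat) : R := snd (ab (c - j)).

Definition A10 : R := INR c * alpha * pi (0, c - 1)%nat * zh0 / f1 zh0.
Definition A11 : R := pi (1, c - 1)%nat - A10.
End Quantities.

(* Main.v *)
Require Import Defs.
From Stdlib Require Import Reals Arith Lra Lia.
From Coquelicot Require Import Coquelicot.
Open Scope R_scope.

Lemma Cmod_pow_n (q : C) n : Cmod (pow_n q n) = Cmod q ^ n.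
Proof.
  induction n; simpl. apply Cmod_1. change (Cmod (Cmult q (pow_n q n)) = Cmod q * Cmod q ^ n).
  rewrite Cmod_mult, IHn; auto.
Qed.

Lemma sum_geom_C (q : C) n : q <> 1%C ->
  sum_n (fun k => pow_n q k) n = ((1 - pow_n q (S n)) / (1 - q))%C.
Proof.
  intros Hq. assert (H1 : (1 - q)%C <> 0%C).
  { intro H. apply Hq. rewrite <- (Cplus_0_l q), <- H. ring. }
  induction n.
  - rewrite sum_O. simpl. unfold one, mult; simpl. field; auto.
  - rewrite sum_Sn, IHn. set (p := pow_n q (S n)).
    change (pow_n q (S (S n))) with (mult q p). unfold plus, mult; simpl. field; auto.
Qed.

Lemma Cgeom (q : C) : Cmod q < 1 -> is_series (fun n => pow_n q n) (/(1 - q))%C.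
Proof.
  intros Hq.
  assert (Hq1 : q <> 1%C). { intro E; subst; rewrite Cmod_1 in Hq; lra. }
  assert (H1 : (1 - q)%C <> 0%C).
  { intro H. apply Hq1. rewrite <- (Cplus_0_l q), <- H. ring. }
  assert (Hm : 0 < Cmod (1 - q)). { apply Cmod_gt_0; auto. }
  unfold is_series. apply filterlim_locally. intros eps.
  assert (Hg := is_lim_seq_geom (Cmod q)).
  rewrite Rabs_pos_eq in Hg by apply Cmod_ge_0. specialize (Hg Hq).
  apply is_lim_seq_spec in Hg.
  assert (He : 0 < eps * Cmod (1 - q)) by (apply Rmult_lt_0_compat; [apply cond_pos|auto]).
  destruct (Hg (mkposreal _ He)) as [N HN]. exists N. intros n Hn.
  apply norm_compat1. rewrite sum_geom_C by auto.
  specialize (HN (S n) ltac:(lia)). simpl in HN.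
  change (norm ?x) with (Cmod x). change (minus ?a ?b) with (Cminus a b).
  replace (((1 - pow_n q (S n)) / (1 - q)) - (/ (1 - q)))%C with
     (- (pow_n q (S n) / (1 - q)))%C.
  2:{ field; auto. }
  rewrite Cmod_opp. unfold Cdiv. rewrite Cmod_mult, Cmod_inv by auto.
  rewrite Cmod_pow_n. simpl. rewrite Rminus_0_r, Rabs_pos_eq in HN.
  2:{ apply Rmult_le_pos. apply Cmod_ge_0. apply pow_le, Cmod_ge_0. }
  apply (Rmult_lt_reg_r (Cmod (1 - q))); auto. rewrite Rmult_assoc, Rinv_l by lra. lra.
Qed.

Ltac bools := repeat match goal with
 | |- context [Nat.eqb ?a ?b] => destruct (Nat.eqb_spec a b); try (exfalso; lia)
 | |- context [Nat.ltb ?a ?b] => destruct (Nat.ltb_spec a b); try (exfalso; lia)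
 | |- context [Nat.leb ?a ?b] => destruct (Nat.leb_spec a b); try (exfalso; lia)
 end.

Ltac getbal Hb := 
  cbv [out_cands in_cands sumR rate inS List.map List.fold_right fst snd] in Hb;
  rewrite ?Nat.sub_0_r in Hb;
  revert Hb; bools; cbv [andb]; intros Hb.

Lemma bal0 c lam mu alpha pi j : stationary c lam mu alpha pi -> (1 <= c)%nat ->
  pi (0, S j)%nat * (lam + INR (Nat.min (S j) c) * alpha) = lam * pi (0, j)%nat.
Proof.
  intros [_ [_ [_ Hb]]] Hc.
  specialize (Hb (0, S j)%nat eq_refl).
  cbv [out_cands in_cands] in Hb. replace (S j - 1)%nat with j in Hb by lia.
  getbal Hb; lra.
Qed.

Lemma bal1 c lam mu alpha pi j : stationary c lam mu alpha pi -> (2 <= c)%nat -> (2 <= j)%nat ->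
  pi (1, j)%nat * (lam + INR (Nat.min (j-1) (c-1)) * alpha + mu) =
   lam * pi (1, j-1)%nat + INR (Nat.min j c) * alpha * pi (0, j)%nat + mu * pi (1, j+1)%nat.
Proof.
  intros [_ [_ [_ Hb]]] Hc Hj.
  specialize (Hb (1, j)%nat). 
  assert (inS c (1,j)%nat = true) by (unfold inS; apply Bool.andb_true_iff; split; apply Nat.leb_le; simpl; lia).
  specialize (Hb H). cbv [out_cands in_cands] in Hb. 
  replace (1-1)%nat with 0%nat in Hb by lia. 
  replace (1+1)%nat with 2%nat in Hb by lia.
  getbal Hb; simpl INR in Hb; lra.
Qed.

Lemma rate_nn c lam mu alpha s t : 0 < lam -> 0 < mu -> 0 < alpha -> 0 <= rate c lam mu alpha s t.
Proof.
  intros. destruct s as [i j], t as [i' j']. cbv [rate].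
  repeat match goal with |- context [if ?b then _ else _] => destruct b end;
  repeat apply Rplus_le_le_0_compat; try lra;
  apply Rmult_le_pos; try apply pos_INR; lra.
Qed.

Lemma term_nn c lam mu alpha pi t s : stationary c lam mu alpha pi ->
  0 < lam -> 0 < mu -> 0 < alpha -> 0 <= pi t * rate c lam mu alpha t s.
Proof.
  intros [Hn _] Hl Hm Ha. destruct (inS c t) eqn:E.
  - apply Rmult_le_pos; auto. apply rate_nn; auto.
  - destruct t as [i j], s as [i' j']. cbv [rate]. rewrite E. simpl. lra.
Qed.

Lemma sum4_zero a b c d : 0<=a -> 0<=b -> 0<=c -> 0<=d -> a+(b+(c+(d+0)))=0 ->
  a=0/\b=0/\c=0/\d=0.
Proof. intros; repeat split; lra. Qed.

Lemma inS_true c i j : (i <= c)%nat -> (i <= j)%nat -> inS c (i,j) = true.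
Proof. intros. unfold inS; apply Bool.andb_true_iff; split; apply Nat.leb_le; simpl; lia. Qed.

Lemma zero_cands c lam mu alpha pi s : stationary c lam mu alpha pi ->
  0 < lam -> 0 < mu -> 0 < alpha -> inS c s = true -> pi s = 0 ->
  forall t, List.In t (in_cands s) -> pi t * rate c lam mu alpha t s = 0.
Proof.
  intros Hst Hl Hm Ha Hs H0. pose proof Hst as [_ [_ [_ Hb]]].
  specialize (Hb s Hs). rewrite H0, Rmult_0_l in Hb.
  destruct s as [i j]. cbv [in_cands sumR List.map List.fold_right] in Hb.
  apply eq_sym, sum4_zero in Hb; try apply term_nn; auto.
  destruct Hb as [? [? [? ?]]].
  intros t Ht. simpl in Ht. intuition (subst; auto).
Qed.

Lemma zero_prop c lam mu alpha pi s t : stationary c lam mu alpha pi ->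
  0 < lam -> 0 < mu -> 0 < alpha -> inS c s = true -> pi s = 0 ->
  List.In t (in_cands s) -> 0 < rate c lam mu alpha t s -> pi t = 0.
Proof.
  intros. assert (H7 := zero_cands c lam mu alpha pi s H H0 H1 H2 H3 H4 t H5).
  apply Rmult_integral in H7. destruct H7; auto. lra.
Qed.

Lemma pi00_pos c lam mu alpha pi : stationary c lam mu alpha pi -> (1 <= c)%nat ->
  0 < lam -> 0 < mu -> 0 < alpha -> 0 < pi (0,0)%nat.
Proof.
  intros Hst Hc Hl Hm Ha. pose proof Hst as [Hn [_ [Hs _]]].
  assert (H00: 0 <= pi (0,0)%nat) by (apply Hn; reflexivity).
  destruct (Rle_lt_or_eq_dec _ _ H00) as [H|H]; [exact H|].
  exfalso. symmetry in H.
  assert (Hd : forall i, (i <= c)%nat -> pi (i,i) = 0).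
  { induction i; intros Hi; auto.
    apply (zero_prop c lam mu alpha pi (i,i)); [auto|auto|auto|auto| apply inS_true; lia | apply IHi; lia | |].
    simpl. right; right; right; left. f_equal; lia.
    cbv [rate inS fst snd]. bools; cbv [andb].
    all: assert (0 <= INR i) by apply pos_INR; rewrite ?S_INR; nra. }
  assert (Hr : forall i k, (1 <= i <= c)%nat -> pi (i,i+k)%nat = 0).
  { intros i k Hi. induction k. rewrite Nat.add_0_r; apply Hd; lia.
    apply (zero_prop c lam mu alpha pi (i,i+k)%nat); [auto|auto|auto|auto| apply inS_true; lia | auto | |].
    simpl. right; right; left. f_equal; lia.
    cbv [rate inS fst snd]. bools; cbv [andb].
    all: assert (1 <= INR i) by (apply (le_INR 1); lia); nra. }
  assert (H0 : forall k, pi (0, k)%nat = 0).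
  { intros [|k]; auto.
    apply (zero_prop c lam mu alpha pi (1, S k)%nat); [auto|auto|auto|auto| apply inS_true; lia | | |].
    replace (S k) with (1 + k)%nat by lia. apply Hr; lia.
    simpl. right; left. f_equal; lia.
    cbv [rate inS fst snd]. bools; cbv [andb]. 
    all: rewrite ?Nat.sub_0_r; assert (0 < INR (Nat.min (S k) c)) by (apply lt_0_INR; lia); nra. }
  assert (sum_n (fun i => Series (fun k => pi (i, i + k)%nat)) c = 0).
  { rewrite (sum_n_ext_loc _ (fun _ => 0)).
    - clear. induction c. rewrite sum_O; auto. rewrite sum_Sn, IHc. unfold plus; simpl; ring.
    - intros i Hi. rewrite (Series_ext _ (fun k => 0 * 0)).
      { rewrite Series_scal_l. apply Rmult_0_l. }
      intros k. destruct i. rewrite H0; symmetry; apply Rmult_0_l. rewrite Hr; [symmetry; apply Rmult_0_l|lia]. }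
  lra.
Qed.

Lemma roots c lam mu alpha : (2<=c)%nat -> 0<lam -> 0<mu -> 0<alpha ->
  0 < z1 c lam mu alpha /\ z1 c lam mu alpha < 1 /\ 1 < zh1 c lam mu alpha /\
  lam * z1 c lam mu alpha * zh1 c lam mu alpha = mu /\
  Bq c lam mu alpha * z1 c lam mu alpha - lam * z1 c lam mu alpha ^ 2 - mu = 0 /\
  (forall x, f1 c lam mu alpha x = - lam * (x - z1 c lam mu alpha) * (x - zh1 c lam mu alpha)).
Proof.
  intros Hc Hl Hm Ha. unfold z1, zh1, f1.
  assert (HB : Bq c lam mu alpha > lam + mu).
  { unfold Bq. assert (2 <= INR c) by (apply (le_INR 2); lia). nra. }
  set (B := Bq c lam mu alpha) in *.
  assert (HD : 0 < B ^ 2 - 4 * lam * mu).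
  { assert (0 < (B - (lam+mu))*(B+(lam+mu))) by (apply Rmult_lt_0_compat; lra). pose proof (Rle_0_sqr (lam - mu)); unfold Rsqr in *. replace (B^2) with (B*B) by ring. nra. }
  set (D := B ^ 2 - 4 * lam * mu) in *.
  assert (Hs : sqrt D * sqrt D = D) by (apply sqrt_sqrt; lra).
  assert (Hs0 : 0 < sqrt D) by (apply sqrt_lt_R0; lra).
  set (s := sqrt D) in *.
  assert (HDB : D < B * B) by (unfold D; nra).
  assert (HsB : s < B) by nra.
  assert (Hmu : mu = (B*B - s*s)/(4*lam)) by (rewrite Hs; unfold D; field; lra).
  assert (Hf : forall x, B * x - lam * x ^ 2 - mu = - lam * (x - (B - s) / (2 * lam)) * (x - (B + s) / (2 * lam))).
  { intros x. rewrite Hmu. field. lra. }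
  assert (Hz1 : (B - s) / (2 * lam) < 1).
  { apply (Rmult_lt_reg_r (2*lam)); [lra|]. unfold Rdiv. rewrite Rmult_assoc, Rinv_l by lra.
    destruct (Rle_or_lt (B - 2*lam) 0). lra.
    assert ((B - 2*lam)*(B-2*lam) < s * s).
    { rewrite Hs; unfold D. assert (lam * (lam + mu - B) < 0) by (apply Rmult_pos_neg; lra). nra. }
    destruct (Rle_or_lt s (B - 2*lam)); [|lra].
    assert (s * s <= (B - 2*lam)*(B-2*lam)) by (apply Rmult_le_compat; lra). lra. }
  assert (Hz0 : 0 < (B - s) / (2 * lam)) by (apply Rdiv_lt_0_compat; lra).
  repeat split; auto.
  - assert (H1 := Hf 1). assert (B*1 - lam*1^2 - mu > 0) by lra.
    set (z := (B - s) / (2 * lam)) in *. set (zh := (B + s) / (2 * lam)) in *.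
    destruct (Rle_or_lt zh 1); auto.
    assert (0 <= (1 - z) * (1 - zh)) by (apply Rmult_le_pos; lra).
    assert (0 <= lam * ((1 - z) * (1 - zh))) by (apply Rmult_le_pos; lra). nra.
  - rewrite Hmu. field. lra.
  - rewrite Hf. ring.
Qed.

Lemma pi0_pos c lam mu alpha pi : stationary c lam mu alpha pi -> (1 <= c)%nat ->
  0 < lam -> 0 < mu -> 0 < alpha -> forall k, 0 < pi (0,k)%nat.
Proof.
  intros Hst Hc Hl Hm Ha. induction k.
  - apply (pi00_pos c lam mu alpha); auto.
  - pose proof (bal0 c lam mu alpha pi k Hst Hc) as H.
    assert (0 <= INR (Nat.min (S k) c)) by apply pos_INR.
    assert (0 < lam + INR (Nat.min (S k) c) * alpha) by nra.
    assert (pi (0, S k)%nat = lam * pi (0, k)%nat / (lam + INR (Nat.min (S k) c) * alpha)).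
    { rewrite <- H. field. lra. }
    rewrite H2. apply Rdiv_lt_0_compat; nra.
Qed.

Lemma pi0_geom m lam mu alpha pi : stationary (S m) lam mu alpha pi ->
  0 < lam -> 0 < mu -> 0 < alpha -> forall n,
  pi (0, m + n)%nat = pi (0, m)%nat * (lam / (lam + INR (S m) * alpha)) ^ n.
Proof.
  intros Hst Hl Hm Ha. induction n.
  - rewrite Nat.add_0_r; simpl; ring.
  - pose proof (bal0 (S m) lam mu alpha pi (m + n) Hst ltac:(lia)) as H.
    replace (Nat.min (S (m + n)) (S m)) with (S m) in H by lia.
    assert (0 <= INR (S m)) by apply pos_INR.
    replace (m + S n)%nat with (S (m + n)) by lia.
    assert (0 < lam + INR (S m) * alpha) by nra.
    assert (pi (0, S (m+n))%nat = lam * pi (0, (m+n))%nat / (lam + INR (S m) * alpha)).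
    { rewrite <- H. field. lra. }
    rewrite H2, IHn, <- tech_pow_Rmult. field. lra.
Qed.

Lemma Pi0_series m lam mu alpha pi z : stationary (S m) lam mu alpha pi ->
  0 < lam -> 0 < mu -> 0 < alpha -> 0 <= z <= 1 ->
  is_series (fun k => pi (0, S m + k)%nat * z ^ (S m + k))
    (pi (0,m)%nat * (lam / (lam + INR (S m) * alpha)) * z ^ (S m)
      / (1 - (lam / (lam + INR (S m) * alpha)) * z)).
Proof.
  intros Hst Hl Hm Ha Hz.
  set (r := lam / (lam + INR (S m) * alpha)).
  assert (0 < INR (S m)) by (apply lt_0_INR; lia).
  assert (Hr : 0 < r < 1).
  { unfold r. split. apply Rdiv_lt_0_compat; nra.
    apply (Rmult_lt_reg_r (lam + INR (S m) * alpha)); [nra|]. unfold Rdiv.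
    rewrite Rmult_assoc, Rinv_l by nra. nra. }
  assert (Hq : Rabs (r * z) < 1).
  { rewrite Rabs_pos_eq by nra. nra. }
  pose proof (is_series_geom _ Hq) as G.
  apply (is_series_scal (pi (0,m)%nat * r * z ^ (S m))) in G.
  eapply is_series_ext; [|unfold Rdiv; exact G].
  intros k. change (scal ?a ?b) with (a * b).
  replace (S m + k)%nat with (m + S k)%nat by lia.
  rewrite (pi0_geom m lam mu alpha pi Hst Hl Hm Ha). fold r.
  replace (m + S k)%nat with (S m + k)%nat by lia. rewrite pow_add, Rpow_mult_distr. simpl. ring.
Qed.

Lemma key m lam mu alpha pi : stationary (S m) lam mu alpha pi -> (1 <= m)%nat ->
  0 < lam -> 0 < mu -> 0 < alpha ->
  mu * z1 (S m) lam mu alpha ^ m * pi (1, S m)%nat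
  - lam * z1 (S m) lam mu alpha ^ (S m) * pi (1, m)%nat
  = INR (S m) * alpha * Pi0hat (S m) pi (z1 (S m) lam mu alpha).
Proof.
  intros Hst Hm1 Hl Hm Ha.
  destruct (roots (S m) lam mu alpha ltac:(lia) Hl Hm Ha) as [Hz0 [Hz1 [_ [_ [Hf _]]]]].
  set (z := z1 (S m) lam mu alpha) in *.
  set (T := fun n => mu * z ^ (m + n) * pi (1, S m + n)%nat - lam * z ^ (S m + n) * pi (1, m + n)%nat).
  set (a := fun k => pi (0, S m + k)%nat * z ^ (S m + k)).
  assert (HT : forall n, T (S n) = T n - INR (S m) * alpha * a n).
  { intros n. unfold T, a.
    pose proof (bal1 (S m) lam mu alpha pi (S m + n) Hst ltac:(lia) ltac:(lia)) as Hb.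
    replace (Nat.min (S m + n - 1) (S m - 1)) with m in Hb by lia.
    replace (Nat.min (S m + n) (S m)) with (S m) in Hb by lia.
    replace (S m + n - 1)%nat with (m + n)%nat in Hb by lia.
    replace (S m + n + 1)%nat with (S m + S n)%nat in Hb by lia.
    replace (m + S n)%nat with (S m + n)%nat by lia.
    replace (z ^ (S m + S n)) with (z ^ (m + n) * z * z) by (replace (S m + S n)%nat with (S (S (m+n))) by lia; simpl; ring).
    replace (z ^ (S m + n)) with (z ^ (m + n) * z) by (replace (S m + n)%nat with (S (m+n)) by lia; simpl; ring).
    unfold Bq in Hf. rewrite S_INR in Hf, Hb |- *.
    set (w := z ^ (m + n)) in *. set (P1 := pi (1%nat, (S m + S n)%nat)) in *.
    set (P0 := pi (1%nat, (S m + n)%nat)) in *. set (Pm := pi (1%nat, (m + n)%nat)) in *.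
    set (e := pi (0%nat, (S m + n)%nat)) in *.
    assert (X : mu * P1 - ((lam + INR m * alpha + mu) * P0 - lam * Pm - (INR m + 1) * alpha * e) = 0) by lra.
    assert (Y : (lam + mu + (INR m + 1 - 1) * alpha) * z - lam * z ^ 2 - mu = 0) by exact Hf.
    apply Rminus_diag_uniq.
    transitivity (w * z * (mu * P1 - ((lam + INR m * alpha + mu) * P0 - lam * Pm - (INR m + 1) * alpha * e))
       + w * P0 * ((lam + mu + (INR m + 1 - 1) * alpha) * z - lam * z ^ 2 - mu)).
    ring. rewrite X, Y. ring. }
  assert (HTs : forall n, T (S n) = T 0%nat - INR (S m) * alpha * sum_n a n).
  { induction n. rewrite HT, sum_O. ring. rewrite HT, IHn, sum_Sn. unfold plus; simpl. ring. }
  assert (HL := Pi0_series m lam mu alpha pi z Hst Hl Hm Ha ltac:(lra)).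
  set (L := pi (0,m)%nat * (lam / (lam + INR (S m) * alpha)) * z ^ (S m)
      / (1 - (lam / (lam + INR (S m) * alpha)) * z)) in HL.
  assert (HPi : Pi0hat (S m) pi z = L).
  { unfold Pi0hat. apply is_series_unique. exact HL. }
  rewrite HPi.
  assert (Hlim1 : is_lim_seq (fun n => T (S n)) (T 0%nat - INR (S m) * alpha * L)).
  { eapply is_lim_seq_ext. intros n. symmetry. apply HTs.
    apply is_lim_seq_minus'. apply is_lim_seq_const.
    apply (is_lim_seq_scal_l _ (INR (S m) * alpha) L). exact HL. }
  assert (Hgeo : forall N, is_lim_seq (fun n => z ^ (N + n)) 0).
  { intros N. apply (is_lim_seq_ext (fun n => z ^ (n + N))).
    intros; f_equal; lia. apply (is_lim_seq_incr_n (fun n => z ^ n) N).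
    apply is_lim_seq_geom. rewrite Rabs_pos_eq; lra. }
  assert (Hp1 : forall N, is_lim_seq (fun n => pi (1, S N + n)%nat) 0).
  { destruct Hst as [_ [Hex _]]. specialize (Hex 1%nat ltac:(lia)).
    apply ex_series_lim_0 in Hex. intros N.
    apply (is_lim_seq_incr_n _ N) in Hex. eapply is_lim_seq_ext; [|exact Hex].
    intros n; simpl. f_equal. f_equal. lia. }
  assert (Hlim2 : is_lim_seq (fun n => T (S n)) 0).
  { unfold T. 
    assert (H := is_lim_seq_minus' _ _ _ _
      (is_lim_seq_scal_l _ mu _ (is_lim_seq_mult' _ _ _ _ (Hgeo (S m)) (Hp1 (S m))))
      (is_lim_seq_scal_l _ lam _ (is_lim_seq_mult' _ _ _ _ (Hgeo (S (S m))) (Hp1 m)))).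
    simpl in H. replace (mu * (0 * 0) - lam * (0 * 0)) with 0 in H by ring.
    eapply is_lim_seq_ext; [|exact H]. intros n. simpl.
    replace (m + S n)%nat with (S m + n)%nat by lia. 
    replace (S (m + S n))%nat with (S (S m) + n)%nat by lia.
    replace (S (m + n))%nat with (S m + n)%nat by lia. 
    replace (z ^ (S m + n)) with (z * z ^ (m + n)) by (replace (S m + n)%nat with (S (m+n)) by lia; reflexivity).
    ring. }
  apply is_lim_seq_unique in Hlim1. apply is_lim_seq_unique in Hlim2.
  rewrite Hlim1 in Hlim2. apply (f_equal real) in Hlim2. cbn [real] in Hlim2. rename Hlim2 into E.
  unfold T in E. cbv beta in E. rewrite !Nat.add_0_r in E. lra.
Qed.

Lemma ab_c c lam mu alpha pi :
  a1 c lam mu alpha pi c = INR c * alpha * Pi0hat c pi (z1 c lam mu alpha) / (mu * z1 c lam mu alpha ^ (c - 1)) /\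
  b1 c lam mu alpha pi c = lam * z1 c lam mu alpha / mu.
Proof. unfold a1, b1. rewrite Nat.sub_diag. split; reflexivity. Qed.

Lemma ab_step c lam mu alpha pi j : (j < c)%nat ->
  a1 c lam mu alpha pi j = (INR j * alpha * pi (0, j)%nat + mu * a1 c lam mu alpha pi (S j)) /
     (lam + mu + (INR j - 1) * alpha - mu * b1 c lam mu alpha pi (S j)) /\
  b1 c lam mu alpha pi j = lam /
     (lam + mu + (INR j - 1) * alpha - mu * b1 c lam mu alpha pi (S j)).
Proof.
  intros Hj. unfold a1, b1. replace (c - j)%nat with (S (c - S j)) by lia. cbn [ab].
  destruct (ab c lam mu alpha pi (c - S j)) as [a' b']. cbn [fst snd].
  replace (c - S (c - S j))%nat with j by lia. split; reflexivity.
Qed.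

Lemma Pi0hat_pos m lam mu alpha pi : stationary (S m) lam mu alpha pi ->
  0 < lam -> 0 < mu -> 0 < alpha -> forall z, 0 < z < 1 -> 0 < Pi0hat (S m) pi z.
Proof.
  intros Hst Hl Hm Ha z Hz.
  pose proof (Pi0_series m lam mu alpha pi z Hst Hl Hm Ha ltac:(lra)) as H.
  unfold Pi0hat. rewrite (is_series_unique _ _ H).
  assert (0 < INR (S m)) by (apply lt_0_INR; lia).
  set (r := lam / (lam + INR (S m) * alpha)).
  assert (Hr : 0 < r < 1).
  { unfold r. split. apply Rdiv_lt_0_compat; nra.
    apply (Rmult_lt_reg_r (lam + INR (S m) * alpha)); [nra|]. unfold Rdiv.
    rewrite Rmult_assoc, Rinv_l by nra. nra. }
  assert (0 < pi (0, m)%nat) by (apply (pi0_pos (S m) lam mu alpha); auto; lia).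
  assert (0 < z ^ S m) by (apply pow_lt; lra).
  apply Rdiv_lt_0_compat. apply Rmult_lt_0_compat; [|auto]. apply Rmult_lt_0_compat; lra. nra.
Qed.

Lemma part2 m lam mu alpha pi : stationary (S m) lam mu alpha pi -> (1 <= m)%nat ->
  0 < lam -> 0 < mu -> 0 < alpha -> forall k, (k < S m)%nat ->
  0 < a1 (S m) lam mu alpha pi (S m - k) /\
  0 < b1 (S m) lam mu alpha pi (S m - k) < lam / mu.
Proof.
  intros Hst Hm1 Hl Hm Ha.
  destruct (roots (S m) lam mu alpha ltac:(lia) Hl Hm Ha) as [Hz0 [Hz1 _]].
  induction k; intros Hk.
  - rewrite Nat.sub_0_r. destruct (ab_c (S m) lam mu alpha pi) as [Ea Eb]. rewrite Ea, Eb.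
    assert (0 < Pi0hat (S m) pi (z1 (S m) lam mu alpha)) by (apply (Pi0hat_pos m lam mu alpha); auto).
    assert (0 < z1 (S m) lam mu alpha ^ (S m - 1)) by (apply pow_lt; lra).
    assert (0 < INR (S m)) by (apply lt_0_INR; lia).
    repeat split.
    + apply Rdiv_lt_0_compat. apply Rmult_lt_0_compat; auto. nra. nra.
    + apply Rdiv_lt_0_compat; nra.
    + unfold Rdiv. apply Rmult_lt_compat_r. apply Rinv_0_lt_compat; lra. nra.
  - destruct (IHk ltac:(lia)) as [Ha' [Hb0 Hb1]].
    destruct (ab_step (S m) lam mu alpha pi (S m - S k) ltac:(lia)) as [Ea Eb].
    replace (S (S m - S k)) with (S m - k)%nat in Ea, Eb by lia.
    rewrite Ea, Eb.
    assert (1 <= INR (S m - S k)) by (apply (le_INR 1); lia).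
    assert (mu * b1 (S m) lam mu alpha pi (S m - k) < lam).
    { apply (Rmult_lt_compat_l mu) in Hb1; auto. unfold Rdiv in Hb1.
      rewrite <- Rmult_assoc, (Rmult_comm mu lam), Rmult_assoc, Rinv_r, Rmult_1_r in Hb1; lra. }
    set (d := lam + mu + (INR (S m - S k) - 1) * alpha - mu * b1 (S m) lam mu alpha pi (S m - k)).
    assert (Hd : mu < d) by (unfold d; nra).
    assert (0 <= pi (0, S m - S k)%nat) by (apply Hst; apply inS_true; lia).
    repeat split.
    + apply Rdiv_lt_0_compat; [|lra].
      assert (0 <= INR (S m - S k) * alpha * pi (0%nat, (S m - S k)%nat)) by
        (apply Rmult_le_pos; [apply Rmult_le_pos|]; lra).
      nra.
    + apply Rdiv_lt_0_compat; lra.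
    + unfold Rdiv. apply Rmult_lt_compat_l; auto. apply Rinv_lt_contravar; nra.
Qed.

Lemma part1 m lam mu alpha pi : stationary (S m) lam mu alpha pi -> (1 <= m)%nat ->
  0 < lam -> 0 < mu -> 0 < alpha -> forall k, (k <= m - 1)%nat ->
  pi (1, S m - k)%nat = a1 (S m) lam mu alpha pi (S m - k) +
     b1 (S m) lam mu alpha pi (S m - k) * pi (1, S m - k - 1)%nat.
Proof.
  intros Hst Hm1 Hl Hm Ha.
  destruct (roots (S m) lam mu alpha ltac:(lia) Hl Hm Ha) as [Hz0 [Hz1 _]].
  induction k; intros Hk.
  - rewrite Nat.sub_0_r. destruct (ab_c (S m) lam mu alpha pi) as [Ea Eb]. rewrite Ea, Eb.
    pose proof (key m lam mu alpha pi Hst Hm1 Hl Hm Ha) as K.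
    replace (S m - 1)%nat with m by lia.
    set (z := z1 (S m) lam mu alpha) in *.
    assert (0 < z ^ m) by (apply pow_lt; lra).
    rewrite <- K. simpl. field. split; lra.
  - assert (Hj : (2 <= S m - S k)%nat) by lia.
    set (j := (S m - S k)%nat) in *.
    replace (S m - k)%nat with (S j) in IHk by lia.
    specialize (IHk ltac:(lia)). replace (S j - 1)%nat with j in IHk by lia.
    destruct (part2 m lam mu alpha pi Hst Hm1 Hl Hm Ha k ltac:(lia)) as [_ [_ Hb1]].
    replace (S m - k)%nat with (S j) in Hb1 by lia.
    destruct (ab_step (S m) lam mu alpha pi j ltac:(lia)) as [Ea Eb].
    rewrite Ea, Eb.
    pose proof (bal1 (S m) lam mu alpha pi j Hst ltac:(lia) Hj) as Hb.
    replace (Nat.min (j - 1) (S m - 1)) with (j - 1)%nat in Hb by lia.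
    replace (Nat.min j (S m)) with j in Hb by lia.
    replace (j + 1)%nat with (S j) in Hb by lia.
    rewrite minus_INR in Hb by lia. simpl INR in Hb.
    assert (mu * b1 (S m) lam mu alpha pi (S j) < lam).
    { apply (Rmult_lt_compat_l mu) in Hb1; auto. unfold Rdiv in Hb1.
      rewrite <- Rmult_assoc, (Rmult_comm mu lam), Rmult_assoc, Rinv_r, Rmult_1_r in Hb1; lra. }
    assert (1 <= INR j) by (apply (le_INR 1); lia).
    set (b' := b1 (S m) lam mu alpha pi (S j)) in *.
    set (a' := a1 (S m) lam mu alpha pi (S j)) in *.
    set (d := lam + mu + (INR j - 1) * alpha - mu * b').
    assert (Hd : mu < d) by (unfold d; nra).
    assert (E : pi (1, j)%nat * d = INR j * alpha * pi (0%nat, j) + mu * a' + lam * pi (1, j - 1)%nat).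
    { unfold d. rewrite IHk in Hb. nra. }
    apply (Rmult_eq_reg_r d); [|lra]. rewrite E. field. lra.
Qed.

Lemma closed1 m lam mu alpha pi : stationary (S m) lam mu alpha pi -> (1 <= m)%nat ->
  0 < lam -> 0 < mu -> 0 < alpha -> zh0 (S m) lam alpha <> zh1 (S m) lam mu alpha ->
  forall n, pi (1, m + n)%nat = A10 (S m) lam mu alpha pi * (/ zh0 (S m) lam alpha) ^ n
     + A11 (S m) lam mu alpha pi * (/ zh1 (S m) lam mu alpha) ^ n.
Proof.
  intros Hst Hm1 Hl Hm Ha Hne.
  destruct (roots (S m) lam mu alpha ltac:(lia) Hl Hm Ha) as [Hz0 [Hz1 [Hzh [Hprod [Hf1z Hf]]]]].
  assert (HINR : 0 < INR (S m)) by (apply lt_0_INR; lia).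
  assert (Hh0 : 1 < zh0 (S m) lam alpha).
  { unfold zh0. apply (Rmult_lt_reg_r lam); auto. unfold Rdiv. rewrite Rmult_assoc, Rinv_l; nra. }
  assert (Hr0 : / zh0 (S m) lam alpha = lam / (lam + INR (S m) * alpha)).
  { unfold zh0. field. nra. }
  assert (HF0 : f1 (S m) lam mu alpha (zh0 (S m) lam alpha) <> 0).
  { rewrite Hf. intro E. apply Rmult_integral in E. destruct E as [E|E].
    apply Rmult_integral in E. destruct E; [lra|lra]. apply Hne; lra. }
  assert (HF1 : f1 (S m) lam mu alpha (zh1 (S m) lam mu alpha) = 0) by (rewrite Hf; ring).
  pose proof (key m lam mu alpha pi Hst Hm1 Hl Hm Ha) as K.
  pose proof (Pi0_series m lam mu alpha pi (z1 (S m) lam mu alpha) Hst Hl Hm Ha ltac:(lra)) as PS.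
  fold (Pi0hat (S m) pi (z1 (S m) lam mu alpha)) in PS.
  apply is_series_unique in PS.
  pose proof (pi0_geom m lam mu alpha pi Hst Hl Hm Ha) as G.
  rewrite <- Hr0 in PS, G.
  unfold A11, A10. replace (S m - 1)%nat with m by lia.
  assert (HF0' := Hf (zh0 (S m) lam alpha)).
  unfold f1 in HF0, HF1, HF0' |- *.
  set (z := z1 (S m) lam mu alpha) in *. set (zh := zh1 (S m) lam mu alpha) in *.
  set (h0 := zh0 (S m) lam alpha) in *. set (B := Bq (S m) lam mu alpha) in *.
  set (P0 := pi (0%nat, m)) in *.
  set (F0 := B * h0 - lam * h0 ^ 2 - mu) in *.
  set (A := INR (S m) * alpha * P0 * h0 / F0).
  set (u := fun n => pi (1, m + n)%nat - A * (/ h0) ^ n - (pi (1%nat, m) - A) * (/ zh) ^ n).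
  assert (Hrec : forall n, u n = 0 -> u (S n) = 0 -> u (S (S n)) = 0).
  { intros n U0 U1. unfold u in U0, U1 |- *.
    pose proof (bal1 (S m) lam mu alpha pi (S m + n) Hst ltac:(lia) ltac:(lia)) as Hb.
    replace (Nat.min (S m + n - 1) (S m - 1)) with m in Hb by lia.
    replace (Nat.min (S m + n) (S m)) with (S m) in Hb by lia.
    replace (S m + n - 1)%nat with (m + n)%nat in Hb by lia.
    replace (S m + n + 1)%nat with (m + S (S n))%nat in Hb by lia.
    replace (S m + n)%nat with (m + S n)%nat in Hb by lia.
    rewrite G in Hb.
    assert (HB : B = lam + mu + INR m * alpha) by (unfold B, Bq; rewrite S_INR; ring).
    assert (Q1 : mu * (/ zh) ^ 2 - B * / zh + lam = 0).
    { replace (mu * (/ zh) ^ 2 - B * / zh + lam) with (-(B*zh - lam*zh^2 - mu) / zh^2) by (field; lra).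
      rewrite HF1. field. lra. }
    assert (Q0 : A * (mu * (/ h0) ^ 2 - B * / h0 + lam) + INR (S m) * alpha * P0 * / h0 = 0).
    { replace (mu * (/ h0) ^ 2 - B * / h0 + lam) with (- F0 / h0^2) by (unfold F0; field; lra).
      unfold A. field. split; lra. }
    set (A11 := pi (1%nat, m) - A) in *.
    cbn [pow] in U1 |- *. cbn [pow] in Hb.
    set (p0 := pi (1%nat, (m + n)%nat)) in *. set (p1 := pi (1%nat, (m + S n)%nat)) in *.
    set (p2 := pi (1%nat, (m + S (S n))%nat)) in *.
    set (r0 := / h0) in *. set (r1 := / zh) in *. set (e0 := r0 ^ n) in *. set (e1 := r1 ^ n) in *.
    apply (Rmult_eq_reg_l mu); [|lra]. rewrite Rmult_0_r.
    transitivity (-(p1 * (lam + INR m * alpha + mu) - (lam * p0 + INR (S m) * alpha * (P0 * (r0 * e0)) + mu * p2))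
      + B * (p1 - A * (r0 * e0) - A11 * (r1 * e1)) - lam * (p0 - A * e0 - A11 * e1)
      - e0 * (A * (mu * r0 ^ 2 - B * r0 + lam) + INR (S m) * alpha * P0 * r0)
      - A11 * e1 * (mu * r1 ^ 2 - B * r1 + lam)).
    { rewrite HB. ring. }
    rewrite Hb, U0, U1, Q0, Q1. ring. }
  assert (Hall : forall n, u n = 0 /\ u (S n) = 0).
  { induction n.
    - split.
      + unfold u. rewrite Nat.add_0_r. simpl. ring.
      + unfold u. replace (m + 1)%nat with (S m) by lia.
        pose proof (part1 m lam mu alpha pi Hst Hm1 Hl Hm Ha 0 ltac:(lia)) as P.
        rewrite Nat.sub_0_r in P. replace (S m - 1)%nat with m in P by lia.
        destruct (ab_c (S m) lam mu alpha pi) as [Ea Eb]. rewrite Ea, Eb in P.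
        replace (S m - 1)%nat with m in P by lia. fold z in P. rewrite P. unfold Pi0hat. rewrite PS.
        unfold A. fold P0.
        assert (0 < z ^ m) by (apply pow_lt; lra).
        assert (F0 = - lam * (h0 - z) * (h0 - zh)) by exact HF0'.
        rewrite H0. rewrite <- Hprod. simpl. field.
        repeat split; try lra.
    - destruct IHn as [U0 U1]. split; auto. }
  intros n. destruct (Hall n) as [U _]. unfold u in U. fold A. lra.
Qed.

Lemma pow_n_rz (r : R) (z : C) k : pow_n (RtoC r * z)%C k = (RtoC (r ^ k) * pow_n z k)%C.
Proof.
  induction k.
  - simpl. unfold one; simpl. change (RtoC 1 = RtoC 1 * RtoC 1)%C. rewrite Cmult_1_l. reflexivity.
  - change (pow_n (RtoC r * z)%C (S k)) with (mult (RtoC r * z)%C (pow_n (RtoC r * z)%C k)).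
    change (pow_n z (S k)) with (mult z (pow_n z k)).
    rewrite IHk. unfold mult; simpl. rewrite RtoC_mult. ring.
Qed.

Theorem lemma3p1 (c : nat) (lam mu alpha : R) (pi : nat * nat -> R) :
  (2 <= c)%nat -> 0 < lam -> 0 < mu -> 0 < alpha -> lam < INR c * mu ->
  stationary c lam mu alpha pi ->
  (* (i) *)
  (forall j : nat, (2 <= j <= c)%nat ->
     pi (1, j)%nat = a1 c lam mu alpha pi j + b1 c lam mu alpha pi j * pi (1, j - 1)%nat) /\
  (* (ii) *)
  (forall j : nat, (1 <= j <= c)%nat ->
     0 < a1 c lam mu alpha pi j /\
     0 < b1 c lam mu alpha pi j < lam / mu) /\
  (* (iii) *)
  (zh0 c lam alpha <> zh1 c lam mu alpha ->
   forall z : C, Cmod z <= 1 ->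
     is_series (fun k => (RtoC (pi (1, c + k)%nat) * pow_n z (c + k - 1))%C)
       (pow_n z (c - 1) *
          (RtoC (A10 c lam mu alpha pi) / (RtoC (zh0 c lam alpha) - z)
           + RtoC (A11 c lam mu alpha pi) / (RtoC (zh1 c lam mu alpha) - z)))%C).
Proof.
  intros Hc Hl Hm Ha _ Hst.
  destruct c as [|m]; [lia|]. assert (Hm1 : (1 <= m)%nat) by lia.
  split; [|split].
  - intros j Hj. replace j with (S m - (S m - j))%nat by lia.
    apply part1; auto; lia.
  - intros j Hj. replace j with (S m - (S m - j))%nat by lia.
    apply part2; auto; lia.
  - intros Hne z Hz.
    pose proof (closed1 m lam mu alpha pi Hst Hm1 Hl Hm Ha Hne) as CL.
    destruct (roots (S m) lam mu alpha ltac:(lia) Hl Hm Ha) as [Hz0 [Hz1 [Hzh _]]].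
    assert (HINR : 0 < INR (S m)) by (apply lt_0_INR; lia).
    assert (Hh0 : 1 < zh0 (S m) lam alpha).
    { unfold zh0. apply (Rmult_lt_reg_r lam); auto. unfold Rdiv. rewrite Rmult_assoc, Rinv_l; nra. }
    set (h0 := zh0 (S m) lam alpha) in *. set (h1 := zh1 (S m) lam mu alpha) in *.
    set (A := A10 (S m) lam mu alpha pi) in *. set (A' := A11 (S m) lam mu alpha pi) in *.
    assert (Hq : forall h, 1 < h -> Cmod (RtoC (/ h) * z)%C < 1).
    { intros h Hh. rewrite Cmod_mult, Cmod_R, Rabs_pos_eq.
      2:{ apply Rlt_le, Rinv_0_lt_compat; lra. }
      assert (0 < / h < 1). { split. apply Rinv_0_lt_compat; lra. rewrite <- Rinv_1. apply Rinv_lt_contravar; lra. }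
      assert (0 <= Cmod z) by apply Cmod_ge_0. nra. }
    pose proof (Cgeom _ (Hq h0 Hh0)) as G0. pose proof (Cgeom _ (Hq h1 Hzh)) as G1.
    apply (is_series_scal (RtoC (A * / h0))) in G0.
    apply (is_series_scal (RtoC (A' * / h1))) in G1.
    pose proof (is_series_plus _ _ _ _ G0 G1) as G.
    apply (is_series_scal (pow_n z m)) in G.
    assert (Hh0' : h0 <> 0) by lra. assert (Hh1' : h1 <> 0) by lra.
    assert (N0 : (RtoC h0 - z)%C <> 0%C).
    { intro E. assert (z = RtoC h0). { rewrite <- (Cplus_0_l z), <- E. ring. }
      subst z. rewrite Cmod_R, Rabs_pos_eq in Hz; lra. }
    assert (N1 : (RtoC h1 - z)%C <> 0%C).
    { intro E. assert (z = RtoC h1). { rewrite <- (Cplus_0_l z), <- E. ring. }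
      subst z. rewrite Cmod_R, Rabs_pos_eq in Hz; lra. }
    assert (R0 : RtoC h0 <> 0%C). { intro E. apply Hh0'. apply (f_equal fst) in E. exact E. }
    assert (R1 : RtoC h1 <> 0%C). { intro E. apply Hh1'. apply (f_equal fst) in E. exact E. }
    replace (S m - 1)%nat with m by lia.
    replace (pow_n z m * (RtoC A / (RtoC h0 - z) + RtoC A' / (RtoC h1 - z)))%C with
      (Cmult (pow_n z m) (Cplus (Cmult (RtoC (A * / h0)) (/ (1 - RtoC (/ h0) * z)))
                              (Cmult (RtoC (A' * / h1)) (/ (1 - RtoC (/ h1) * z)))))%C.
    2:{ rewrite !RtoC_mult, !RtoC_inv by auto. field. repeat split; auto. }
    eapply is_series_ext; [|exact G].
    intros k. simpl.
    repeat change (scal ?a ?b) with (Cmult a b). repeat change (plus ?a ?b) with (Cplus a b).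
    rewrite !pow_n_rz, Nat.sub_0_r.
    replace (S (m + k)) with (m + S k)%nat by lia.
    rewrite CL, pow_n_plus. change (mult ?a ?b) with (Cmult a b).
    cbn [pow]. rewrite !RtoC_plus, !RtoC_mult. ring.
Qed.
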